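(* Let $(X,\pi)$ be a finite symmetric two-player game with relative payoff game $(X,\Delta)$. If $(X,\Delta)$ is a generalized ordinal potential game, then imitation is not subject to a money pump.
   Context: $\pi(x,y)$ is the payoff of the player choosing $x$ against $y$; $\Delta(x,y)=\pi(x,y)-\pi(y,x)$. The symmetric game $(X,\Delta)$ is a generalized ordinal potential game if there is $P:X\times X\to\mathbb{R}$ such that for all $y,x,x'\in X$: $\Delta(x,y)-\Delta(x',y)>0$ implies $P(x,y)-P(x',y)>0$, and $\Delta(x,y)-\Delta(x',y)>0$ implies $P(y,x)-P(y,x')>0$. Imitate-the-best: given initial $y_0\in X$ and any opponent sequence $(x_t)_{t\ge0}$, $y_t=x_{t-1}$ if $\Delta(x_{t-1},y_{t-1})>0$ and $y_t=y_{t-1}$ otherwise. Imitation is not subject to a money pump if there is $M\in\mathbb{R}_+$ such that for every $y_0\in X$ and every sequence $(x_t)$, $\limsup_{T\to\infty}\sum_{t=0}^T\Delta(x_t,y_t)\le M$. *)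

(* Defs.v *)
From Stdlib Require Import Reals List.
From Coquelicot Require Import Coquelicot.
Open Scope R_scope.

Definition rel_payoff {X : Type} (pi : X -> X -> R) (x y : X) : R :=
  pi x y - pi y x.

Definition finite_type (X : Type) : Prop :=
  exists l : list X, forall x : X, In x l.

Definition gen_ordinal_potential {X : Type} (Delta : X -> X -> R) : Prop :=
  exists P : X -> X -> R,
    forall y x x' : X,
      (Delta x y - Delta x' y > 0 -> P x y - P x' y > 0) /\
      (Delta x y - Delta x' y > 0 -> P y x - P y x' > 0).

Fixpoint imitate {X : Type} (Delta : X -> X -> R) (y0 : X) (xs : nat -> X)
    (t : nat) : X :=
  match t with
  | O => y0
  | S t' =>
      let y' := imitate Delta y0 xs t' in
      if Rlt_dec 0 (Delta (xs t') y') then xs t' else y'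
  end.

Definition pump_sum {X : Type} (Delta : X -> X -> R) (y0 : X) (xs : nat -> X)
    (T : nat) : R :=
  sum_f_R0 (fun t => Delta (xs t) (imitate Delta y0 xs t)) T.

Definition no_money_pump {X : Type} (Delta : X -> X -> R) : Prop :=
  exists M : R, 0 <= M /\
    forall (y0 : X) (xs : nat -> X),
      Rbar_le (LimSup_seq (pump_sum Delta y0 xs)) (Finite M).

(* Main.v *)
Require Import Defs.
From Stdlib Require Import Reals List Lra Lia.
From Coquelicot Require Import Coquelicot.
Open Scope R_scope.

Section Aux.
Context {X : Type}.

Definition cnt (D : X -> R) (x : X) (l : list X) : nat :=
  length (filter (fun z => if Rlt_dec (D z) (D x) then true else false) l).

Lemma cnt_le_len D x l : (cnt D x l <= length l)%nat.
Proof.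
  unfold cnt; induction l as [|a l IH]; simpl; [lia|].
  destruct (Rlt_dec (D a) (D x)); simpl; lia.
Qed.

Lemma cnt_mono D x y l : D y < D x -> (cnt D y l <= cnt D x l)%nat.
Proof.
  intros H; unfold cnt; induction l as [|a l IH]; simpl; [lia|].
  destruct (Rlt_dec (D a) (D y)); destruct (Rlt_dec (D a) (D x)); simpl; try lia.
  exfalso; lra.
Qed.

Lemma cnt_strict D x y l : D y < D x -> In y l -> (cnt D y l < cnt D x l)%nat.
Proof.
  intros H Hin; induction l as [|a l IH]; simpl in *; [contradiction|].
  unfold cnt in *; simpl.
  destruct Hin as [<-|Hin].
  - destruct (Rlt_dec (D a) (D a)); [lra|].
    destruct (Rlt_dec (D a) (D x)); [|lra]. simpl.
    pose proof (cnt_mono D x a l H); unfold cnt in *; lia.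
  - specialize (IH Hin).
    destruct (Rlt_dec (D a) (D y)); destruct (Rlt_dec (D a) (D x)); simpl; try lia.
    exfalso; lra.
Qed.

Definition lsum (g : X -> R) (l : list X) : R := fold_right (fun a acc => g a + acc) 0 l.

Lemma lsum_nonneg g l : (forall a, 0 <= g a) -> 0 <= lsum g l.
Proof. intros Hg; induction l; simpl; [lra|]. specialize (Hg a); lra. Qed.

Lemma lsum_ge g l a : (forall a, 0 <= g a) -> In a l -> g a <= lsum g l.
Proof.
  intros Hg Hin; induction l as [|b l IH]; simpl in *; [contradiction|].
  destruct Hin as [<-|Hin].
  - pose proof (lsum_nonneg g l Hg); lra.
  - specialize (IH Hin); specialize (Hg b); lra.
Qed.
End Aux.

Theorem proposition4 (X : Type) (pi : X -> X -> R) :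
  finite_type X ->
  gen_ordinal_potential (rel_payoff pi) ->
  no_money_pump (rel_payoff pi).
Proof.
  intros [l Hl] [P HP].
  set (Dl := rel_payoff pi).
  set (D := fun x => P x x).
  assert (Hsw : forall x y, Dl x y > 0 -> D y < D x).
  { intros x y H. unfold D.
    assert (Hxx : forall z, Dl z z = 0) by (intros; unfold Dl, rel_payoff; ring).
    assert (Hanti : forall a b, Dl a b = - Dl b a) by (intros; unfold Dl, rel_payoff; ring).
    destruct (HP y x y) as [_ H2].
    assert (A : P y x - P y y > 0) by (apply H2; unfold Dl, rel_payoff in *; lra).
    destruct (HP x x y) as [H3 _].
    assert (Bq : P x x - P y x > 0) by (apply H3; unfold Dl, rel_payoff in *; lra).
    lra. }
  set (B := lsum (fun a => lsum (fun b => Rabs (Dl a b)) l) l).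
  assert (HB0 : 0 <= B) by (apply lsum_nonneg; intros; apply lsum_nonneg; intros; apply Rabs_pos).
  assert (HB : forall a b, Dl a b <= B).
  { intros a b. eapply Rle_trans; [apply Rle_abs|].
    eapply Rle_trans.
    - apply (lsum_ge (fun b => Rabs (Dl a b)) l b); [intros; apply Rabs_pos|apply Hl].
    - apply (lsum_ge (fun a => lsum (fun b => Rabs (Dl a b)) l) l a);
        [intros; apply lsum_nonneg; intros; apply Rabs_pos|apply Hl]. }
  exists (B * INR (length l)). split.
  { apply Rmult_le_pos; [lra|apply pos_INR]. }
  intros y0 xs.
  set (r := fun t => INR (cnt D (imitate Dl y0 xs t) l)).
  assert (Hstep : forall t, Dl (xs t) (imitate Dl y0 xs t) <= B * (r (S t) - r t)).
  { intros t. unfold r. simpl.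
    destruct (Rlt_dec 0 (Dl (xs t) (imitate Dl y0 xs t))) as [Hp|Hn].
    - pose proof (cnt_strict D (xs t) (imitate Dl y0 xs t) l
        (Hsw _ _ Hp) (Hl _)) as Hc.
      apply le_INR in Hc. rewrite S_INR in Hc.
      pose proof (HB (xs t) (imitate Dl y0 xs t)).
      assert (1 <= INR (cnt D (xs t) l) - INR (cnt D (imitate Dl y0 xs t) l)) by lra.
      eapply Rle_trans; [exact H|].
      rewrite <- (Rmult_1_r B) at 1. apply Rmult_le_compat_l; lra.
    - replace (B * _) with 0 by ring. lra. }
  assert (Hsum : forall T, pump_sum Dl y0 xs T <= B * (r (S T) - r O)).
  { induction T as [|T IH].
    - unfold pump_sum; simpl. apply Hstep.
    - change (pump_sum Dl y0 xs (S T)) with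
        (pump_sum Dl y0 xs T + Dl (xs (S T)) (imitate Dl y0 xs (S T))).
      replace (B * (r (S (S T)) - r O)) with
        (B * (r (S T) - r O) + B * (r (S (S T)) - r (S T))) by ring.
      pose proof (Hstep (S T)). lra. }
  assert (Hbd : forall T, pump_sum Dl y0 xs T <= B * INR (length l)).
  { intros T. eapply Rle_trans; [apply Hsum|]. apply Rmult_le_compat_l; [lra|].
    unfold r. pose proof (cnt_le_len D (imitate Dl y0 xs (S T)) l) as H1.
    apply le_INR in H1. pose proof (pos_INR (cnt D (imitate Dl y0 xs 0) l)). lra. }
  rewrite <- (LimSup_seq_const (B * INR (length l))).
  apply LimSup_le. exists O. intros n _. apply Hbd.
Qed.
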